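(* Let $(X,d_X)$ and $(Y,d_Y)$ be compact metric spaces and equip $X\times Y$ with the metric $d((x,y),(x',y'))=d_X(x,x')+d_Y(y,y')$. Let $T:X\times Y\to X\times Y$ be an isometry (onto) such that $\alpha_T(C(X)\otimes1_Y)\subseteq C(X)\otimes1_Y$, where $\alpha_T:C(X\times Y)\to C(X\times Y)$, $\alpha_T(F)=F\circ T$. Then $T$ is a product isometry: there are isometries $h$ of $X$ and $k$ of $Y$ with $T(x,y)=(h(x),k(y))$ for all $(x,y)$. In particular the group of such isometries equals $\mathrm{ISO}(X)\times\mathrm{ISO}(Y)$. *)

(* Defs.v *)
From Stdlib Require Import Reals.
Open Scope R_scope.

Definition is_metric {X : Type} (d : X -> X -> R) : Prop :=
  (forall x y, 0 <= d x y) /\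
  (forall x y, d x y = 0 <-> x = y) /\
  (forall x y, d x y = d y x) /\
  (forall x y z, d x z <= d x y + d y z).

Definition seq_converges {X : Type} (d : X -> X -> R) (u : nat -> X) (l : X) : Prop :=
  forall eps, 0 < eps -> exists N, forall n, (n >= N)%nat -> d (u n) l < eps.

(* Compactness of a metric space (sequential compactness, equivalent for
   metric spaces): every sequence has a convergent subsequence. *)
Definition compact_metric {X : Type} (d : X -> X -> R) : Prop :=
  forall u : nat -> X, exists (phi : nat -> nat) (l : X),
    (forall n m, (n < m)%nat -> (phi n < phi m)%nat) /\
    seq_converges d (fun n => u (phi n)) l.

Definition continuous_on_metric {X : Type} (d : X -> X -> R) (f : X -> R) : Prop :=
  forall x eps, 0 < eps -> exists delta, 0 < delta /\
    forall x', d x x' < delta -> Rabs (f x' - f x) < eps.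

Definition onto_isometry {X : Type} (d : X -> X -> R) (h : X -> X) : Prop :=
  (forall x x', d (h x) (h x') = d x x') /\ (forall z, exists x, h x = z).

Definition sum_metric {X Y : Type} (dX : X -> X -> R) (dY : Y -> Y -> R)
  (p q : X * Y) : R := dX (fst p) (fst q) + dY (snd p) (snd q).

(* alpha_T (C(X) (x) 1_Y) is contained in C(X) (x) 1_Y: for every continuous
   f on X, F = f o pr_1 satisfies F o T = g o pr_1 for some continuous g on X. *)
Definition preserves_CX_tensor_1 {X Y : Type} (dX : X -> X -> R)
  (T : X * Y -> X * Y) : Prop :=
  forall f : X -> R, continuous_on_metric dX f ->
    exists g : X -> R, continuous_on_metric dX g /\
      forall x y, f (fst (T (x, y))) = g x.

(* Main.v *)
Require Import Defs.
From Stdlib Require Import Reals.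
From Stdlib Require Import ZArith Lra Lia Classical ClassicalEpsilon.
Open Scope R_scope.

Fixpoint itr {Y : Type} (f : Y -> Y) (n : nat) (z : Y) : Y :=
  match n with O => z | S n => f (itr f n z) end.

Lemma itr_add {Y} (f : Y -> Y) n m z : itr f (n + m) z = itr f n (itr f m z).
Proof. induction n; simpl; congruence. Qed.

Lemma itr_iso {Y} (d : Y -> Y -> R) f (hf : forall a b, d (f a) (f b) = d a b) n a b :
  d (itr f n a) (itr f n b) = d a b.
Proof. induction n; simpl; auto. rewrite hf; auto. Qed.

Lemma phi_ge (phi : nat -> nat) (H : forall n m, (n < m)%nat -> (phi n < phi m)%nat) :
  forall n, (n <= phi n)%nat.
Proof. induction n. lia. specialize (H n (S n) ltac:(lia)). lia. Qed.

Lemma iso_onto {Y : Type} (d : Y -> Y -> R) (hm : is_metric d) (hc : compact_metric d)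
  (f : Y -> Y) (hf : forall a b, d (f a) (f b) = d a b) : forall z, exists y, f y = z.
Proof.
  destruct hm as [h0 [h1 [hs ht]]].
  intro z. apply NNPP; intro Hn.
  destruct (classic (exists eps, 0 < eps /\ forall y, eps <= d z (f y))) as [[e [He Hy]]|HB].
  - destruct (hc (fun n => itr f n z)) as [phi [l [Hphi Hcv]]].
    destruct (Hcv (e/2) ltac:(lra)) as [N HN].
    pose proof (HN N ltac:(lia)) as A. pose proof (HN (S N) ltac:(lia)) as B.
    simpl in A, B.
    pose proof (Hphi N (S N) ltac:(lia)) as Hlt.
    assert (Hd : d (itr f (phi N) z) (itr f (phi (S N)) z) < e).
    { pose proof (ht (itr f (phi N) z) l (itr f (phi (S N)) z)). rewrite (hs l) in H. lra. }
    replace (phi (S N)) with (phi N + S (phi (S N) - phi N - 1))%nat in Hd by lia.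
    rewrite itr_add, itr_iso in Hd by exact hf. simpl in Hd.
    specialize (Hy (itr f (phi (S N) - phi N - 1) z)). lra.
  - assert (Hc : forall n : nat, exists y, d z (f y) < / (INR n + 1)).
    { intro n. apply NNPP; intro Hc. apply HB. exists (/ (INR n + 1)). split.
      - apply Rinv_0_lt_compat. pose proof (pos_INR n). lra.
      - intro y. apply Rnot_lt_le. intro Hl. apply Hc. exists y. exact Hl. }
    set (u := fun n => proj1_sig (constructive_indefinite_description _ (Hc n))).
    assert (Hu : forall n, d z (f (u n)) < / (INR n + 1)).
    { intro n. unfold u. destruct (constructive_indefinite_description _ (Hc n)); simpl; auto. }
    destruct (hc u) as [phi [l [Hphi Hcv]]].
    apply Hn. exists l. apply h1. rewrite hs.
    destruct (Rle_lt_or_eq_dec 0 (d z (f l)) (h0 _ _)) as [Hp|Hp]; [|lra].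
    exfalso. set (e := d z (f l)) in *.
    destruct (Hcv (e/2) ltac:(lra)) as [N HN].
    destruct (archimed (2/e)) as [Ha _].
    set (M := Z.to_nat (up (2/e))).
    assert (HM : 2/e < INR M).
    { unfold M. rewrite INR_IZR_INZ. rewrite Z2Nat.id; [lra|].
      assert (0 < 2/e) by (apply Rdiv_lt_0_compat; lra).
      apply le_IZR. lra. }
    set (n := (N + M)%nat).
    pose proof (HN n ltac:(unfold n; lia)) as A. simpl in A.
    pose proof (Hu (phi n)) as B.
    pose proof (phi_ge phi Hphi n) as C.
    assert (Hinv : / (INR (phi n) + 1) < e/2).
    { assert (INR M <= INR (phi n)) by (apply le_INR; unfold n in *; lia).
      assert (2/e < INR (phi n) + 1) by lra.
      assert (0 < 2/e) by (apply Rdiv_lt_0_compat; lra).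
      replace (e/2) with (/ (2/e)) by (field; lra).
      apply Rinv_lt_contravar; [apply Rmult_lt_0_compat; lra | lra]. }
    pose proof (ht z (f (u (phi n))) (f l)). rewrite hf in H. unfold e in *. lra.
Qed.

Theorem lemma3p3 (X Y : Type) (dX : X -> X -> R) (dY : Y -> Y -> R)
  (hmX : is_metric dX) (hmY : is_metric dY)
  (hcX : compact_metric dX) (hcY : compact_metric dY)
  (T : X * Y -> X * Y) (hT : onto_isometry (sum_metric dX dY) T) :
  preserves_CX_tensor_1 dX T <->
  exists (h : X -> X) (k : Y -> Y),
    onto_isometry dX h /\ onto_isometry dY k /\
    forall x y, T (x, y) = (h x, k y).
Proof.
  destruct hT as [Tiso Tonto].
  pose proof hmX as [x0' [x1' [xs xt]]].
  pose proof hmY as [y0' [y1' [ys yt]]].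
  split.
  - intro HP.
    assert (S1 : forall x y y', fst (T (x, y)) = fst (T (x, y'))).
    { intros x y y'.
      destruct (HP (fun a => dX a (fst (T (x, y'))))) as [g [_ Hg]].
      + intros a eps He. exists eps. split; auto. intros a' Ha'.
        pose proof (xt a a' (fst (T (x, y')))). pose proof (xt a' a (fst (T (x, y')))).
        rewrite (xs a' a) in H0. apply Rabs_def1; lra.
      + pose proof (Hg x y) as A. pose proof (Hg x y') as B.
        apply x1'. rewrite A, <- B. apply x1'. reflexivity. }
    assert (S2 : forall x y y', dY (snd (T (x, y))) (snd (T (x, y'))) = dY y y').
    { intros x y y'. pose proof (Tiso (x, y) (x, y')) as A. unfold sum_metric in A; simpl in A.
      rewrite S1 with (y' := y') in A. assert (dX x x = 0) by (apply x1'; auto).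
      assert (dX (fst (T (x, y'))) (fst (T (x, y'))) = 0) by (apply x1'; auto). lra. }
    assert (S2o : forall x z, exists y, snd (T (x, y)) = z).
    { intro x. apply (iso_onto dY hmY hcY (fun y => snd (T (x, y)))). intros; apply S2. }
    assert (S3 : forall x x' y, snd (T (x, y)) = snd (T (x', y)) /\
                 dX (fst (T (x, y))) (fst (T (x', y))) = dX x x').
    { intros x x' y. destruct (S2o x' (snd (T (x, y)))) as [y' Hy'].
      pose proof (Tiso (x, y) (x', y')) as A. pose proof (Tiso (x, y) (x', y)) as B.
      unfold sum_metric in A, B; simpl in A, B.
      rewrite Hy', (S1 x' y' y) in A.
      assert (dY (snd (T (x, y))) (snd (T (x, y))) = 0) by (apply y1'; auto).
      assert (dY y y = 0) by (apply y1'; auto).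
      pose proof (y0' (snd (T (x, y))) (snd (T (x', y)))).
      pose proof (y0' y y').
      assert (Hyy : y = y') by (apply y1'; lra). subst y'.
      split; [congruence|lra]. }
    destruct (classic (inhabited X /\ inhabited Y)) as [[[x0] [y0]]|Hne].
    + exists (fun x => fst (T (x, y0))), (fun y => snd (T (x0, y))).
      split; [split|split; [split|]].
      * intros; apply S3.
      * intro z. destruct (Tonto (z, y0)) as [[x y] Hxy]. exists x.
        rewrite (S1 x y0 y), Hxy. reflexivity.
      * intros; apply S2.
      * apply S2o.
      * intros x y. rewrite (surjective_pairing (T (x, y))).
        f_equal; [apply S1|symmetry; apply S3].
    + exists (fun x => x), (fun y => y). split; [split|split; [split|]].
      * auto.
      * intro z; exists z; auto.
      * auto.
      * intro z; exists z; auto.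
      * intros x y. exfalso. apply Hne. split; constructor; auto.
  - intros [h [k [[hi ho] [ki Hk]]]] f Hf.
    exists (fun x => f (h x)). split.
    + intros x eps He. destruct (Hf (h x) eps He) as [del [Hd Hd']].
      exists del. split; auto. intros x' Hx'. apply Hd'. rewrite hi. auto.
    + intros x y. rewrite Hk. reflexivity.
Qed.
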